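(* Let $F(x)=\frac{1-\sqrt{1-4x}}{2x}=\sum_{n\ge0}\frac{1}{n+1}\binom{2n}{n}x^n$ be the generating function of the Catalan numbers. Let $k$ be a positive integer and $m\in\mathbb{N}$. Then $D_{2k,1-k-m}(N)=0$ for $N=1,\dots,m+k-1$ and $D_{2k,1-k-m}(n+m+k)=(-1)^{\binom{m+k}{2}}D_{2k,1-k+m}(n)$ for all $n\in\mathbb{N}$; and $D_{2k-1,2-k-m}(N)=0$ for $N=1,\dots,m+k-2$ and $D_{2k-1,2-k-m}(n+m+k-1)=(-1)^{\binom{m+k-1}{2}}D_{2k-1,1-k+m}(n)$ for all $n\in\mathbb{N}$.
   Context: For a power series $F(x)=\sum_{n\ge0}a_nx^n$ and $K\ge1$, write $F(x)^K=\sum_{n\ge0}a_{K,n}x^n$ and set $a_{K,n}=0$ for $n<0$. For $M\in\mathbb{Z}$ and $K,N\in\mathbb{N}$ with $K\ge1$, define the shifted Hankel determinant $D_{K,M}(N)=\det(a_{K,i+j+M})_{i,j=0}^{N-1}$, with $D_{K,M}(0)=1$. $\mathbb{N}=\{0,1,2,\dots\}$. *)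

(* Defs.v *)
From HB Require Import structures.
From mathcomp Require Import all_boot all_order all_algebra.
Set Implicit Arguments. Unset Strict Implicit. Unset Printing Implicit Defensive.
Import Order.TTheory GRing.Theory Num.Theory.
Local Open Scope ring_scope.

Definition catF (n : nat) : rat := ('C(n.*2, n))%:R / (n.+1)%:R.

(* Cauchy power of a power series given by its coefficient sequence:
   spow a K n = [x^n] (sum_i a i x^i)^K ; spow a 0 = constant series 1. *)
Fixpoint spow (a : nat -> rat) (K : nat) (n : nat) : rat :=
  match K with
  | O => if n == 0%N then 1 else 0
  | S K' => \sum_(i < n.+1) a i * spow a K' (n - i)%N
  end.

Definition aKn (K : nat) (n : int) : rat :=
  match n with
  | Posz n' => spow catF K n'
  | Negz _ => 0
  end.

Definition hankelD (K : nat) (M : int) (N : nat) : rat :=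
  \det (\matrix_(i < N, j < N) aKn K ((i + j)%N%:Z + M)).

(* Main.v *)
Require Import Defs.
From HB Require Import structures.
From mathcomp Require Import all_boot all_order all_algebra.
From mathcomp Require Import zify ring lra.
Import Order.TTheory GRing.Theory Num.Theory.
Local Open Scope ring_scope.

Lemma bin_step n : ('C(n.*2.+2, n.+1) * n.+1 = 'C(n.*2, n) * (n.*2.+1).*2)%N.
Proof.
have h1 := mul_bin_diag (n.*2.+2) n.
have h2 := mul_bin_down (n.*2.+1) n.
rewrite /= in h1 h2.
have e : (n.*2.+1 - n = n.+1)%N by rewrite -addnn; lia.
rewrite e in h2.
apply/eqP; rewrite -(eqn_pmul2r (ltn0Sn n)); apply/eqP.
rewrite (mulnC 'C(n.*2.+2, n.+1)) -h1 -!muln2.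
have -> : (n * 2).+2 = (n.+1 * 2)%N by lia.
rewrite -!muln2 in h2; nia.
Qed.

Lemma catF_step n : (n.+2)%:R * catF n.+1 = ((n.*2.+1).*2)%:R * catF n.
Proof.
rewrite /catF doubleS.
have hn1 : (n.+1)%:R != 0 :> rat by rewrite pnatr_eq0.
have hn2 : (n.+2)%:R != 0 :> rat by rewrite pnatr_eq0.
have := congr1 (fun x : nat => x%:R : rat) (bin_step n).
rewrite !natrM => h.
rewrite mulrC divfK //. apply: (mulIf hn1). rewrite h. field. by rewrite -natr1 addrC in hn1.
Qed.

Lemma catF0 : catF 0 = 1.
Proof. by rewrite /catF bin0 divr1. Qed.

Lemma catF1 : catF 1 = 1.
Proof. by rewrite /catF bin1 divff. Qed.

Lemma catalan_rec n : catF n.+1 = \sum_(i < n.+1) catF i * catF (n - i).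
Proof.
pose D := n.+2.
pose Cp : {poly rat} := \poly_(i < D) catF i.
pose R : {poly rat} := 'X * Cp^`() - 4%:P * ('X * ('X * Cp^`())) + Cp
   - 2%:P * ('X * Cp) - 1%:P.
have hR : forall i, (i < D)%N -> R`_i = 0.
  move=> i hi; rewrite /R !(coefB, coefD, coefN, coefCM, coefXM, coef_deriv, coefC, coef_poly).
  case: i hi => [|i] hi /=.
    by rewrite catF0 !mulr0 !subr0 subrr.
  rewrite hi (ltnW hi).
  case: i hi => [|i] hi /=.
    rewrite catF1 catF0 mulr1n; lra.
  rewrite (ltn_trans (ltnSn _) hi).
  have := catF_step i.+1.
  move: (catF i.+2) (catF i.+1) => a b h.
  transitivity ((i.+3)%:R * a - ((i.+1).*2.+1).*2%:R * b).
    rewrite -!(mulr_natr a) -!(mulr_natr b) -!muln2 -!natr1 !natrM -!natr1. ring.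
  by rewrite h subrr.
pose E : {poly rat} := 'X * Cp * Cp - Cp + 1%:P.
pose Q : {poly rat} := 2%:P * ('X * Cp) - 1%:P.
have hT : 'X * E^`() - 4%:P * ('X * ('X * E^`())) + E = R * Q.
  rewrite /E /R /Q !derivE. ring.
have hEdef : E = 'X * Cp * Cp - Cp + 1%:P by [].
clearbody E.
have he : forall i, (i < D)%N -> E`_i = 0.
  elim=> [|i IH] hi.
    rewrite hEdef coefD coefB !coefC -mulrA coefXM coef_poly /= catF0 sub0r addNr.
    done.
  have := congr1 (fun p : {poly rat} => p`_i.+1) hT.
  rewrite coefM big1; last first.
    move=> j _; by rewrite hR ?mul0r // (leq_trans (ltn_ord j) hi).
  rewrite !(coefD, coefB, coefN, coefCM, coefXM, coef_deriv) /=.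
  case: i IH hi => [|i] IH hi /=.
    move: (E`_1) => e h.
    have : e * 2%:R = 0 by rewrite -h mulr0 subr0 mulr1n mulr2n mulrDr mulr1.
    by move/eqP; rewrite mulf_eq0 pnatr_eq0 orbF => /eqP.
  rewrite (IH (ltnW hi)).
  move: (E`_i.+2) => e h.
  have : e * i.+3%:R = 0.
    by rewrite -h mul0rn mulr0 subr0 -[i.+3%:R]natr1 mulrDr mulr1 mulr_natr.
  by move/eqP; rewrite mulf_eq0 pnatr_eq0 orbF => /eqP.
have := he n.+1 (ltnSn _).
rewrite hEdef !(coefD, coefB, coefN, coefC) -mulrA coefXM /= coef_poly /=.
rewrite ltnSn addr0 => /eqP; rewrite subr_eq0 => /eqP <-.
rewrite coefM; apply: eq_bigr => i _; rewrite !coef_poly.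
rewrite (leq_trans (ltn_ord i)) //.
by rewrite (leq_ltn_trans (leq_subr _ _)).
Qed.

Definition eqm (D : nat) (p q : {poly rat}) := forall i, (i < D)%N -> p`_i = q`_i.

Section Eqm.
Variable D : nat.
Lemma eqm_refl p : eqm D p p. Proof. by []. Qed.
Lemma eqm_eq p q : p = q -> eqm D p q. Proof. by move=> ->. Qed.
Lemma eqm_sym p q : eqm D p q -> eqm D q p. Proof. by move=> h i hi; rewrite h. Qed.
Lemma eqm_trans p q r : eqm D p q -> eqm D q r -> eqm D p r.
Proof. by move=> h1 h2 i hi; rewrite h1 // h2. Qed.
Lemma eqmD p q r t : eqm D p q -> eqm D r t -> eqm D (p + r) (q + t).
Proof. by move=> h1 h2 i hi; rewrite !coefD h1 // h2. Qed.
Lemma eqmN p q : eqm D p q -> eqm D (- p) (- q).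
Proof. by move=> h1 i hi; rewrite !coefN h1. Qed.
Lemma eqmB p q r t : eqm D p q -> eqm D r t -> eqm D (p - r) (q - t).
Proof. by move=> h1 h2; apply: eqmD => //; apply: eqmN. Qed.
Lemma eqmM p q r t : eqm D p q -> eqm D r t -> eqm D (p * r) (q * t).
Proof.
move=> h1 h2 i hi; rewrite !coefM; apply: eq_bigr => j _.
have hj : (j < D)%N by exact: leq_trans (ltn_ord j) hi.
have hij : (i - j < D)%N by rewrite (leq_ltn_trans (leq_subr _ _)).
by rewrite h1 // h2.
Qed.
Lemma eqmX p q K : eqm D p q -> eqm D (p ^+ K) (q ^+ K).
Proof. move=> h; elim: K => [|K IH]; first exact: eqm_refl.
by rewrite !exprS; apply: eqmM. Qed.
End Eqm.

Lemma powF D K t : (t < D)%N -> ((\poly_(i < D) catF i)^+K)`_t = spow catF K t.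
Proof.
elim: K t => [|K IH] t ht /=.
  by rewrite expr0 coef1; case: (t == 0%N).
rewrite exprS coefM; apply: eq_bigr => i _.
have hi : (i < D)%N by apply: leq_ltn_trans ht; rewrite -ltnS.
have hti : (t - i < D)%N by rewrite (leq_ltn_trans (leq_subr _ _)).
by rewrite coef_poly hi IH.
Qed.

Fixpoint Pp (K : nat) : {poly rat} :=
  match K with
  | 0 => 1 + 1
  | S K1 => match K1 with
            | 0 => 1
            | S K2 => Pp K1 - 'X * Pp K2
            end
  end.

Lemma Pp_coef K : (forall t, (K < t.*2)%N -> (Pp K)`_t = 0) /\
                  (forall t, (K.+1 < t.*2)%N -> (Pp K.+1)`_t = 0).
Proof.
elim: K => [|K [IH1 IH2]].
  split=> t ht /=; rewrite ?coefD coef1; case: t ht => //.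
split=> // t ht.
rewrite /= coefB coefXM.
case: t ht => [|t] ht //=.
rewrite IH2; last by lia.
rewrite IH1; last by rewrite doubleS in ht; lia.
by rewrite subrr.
Qed.

Lemma aKn_sub K t : aKn K (t%:Z - K%:Z) = if (t < K)%N then 0 else spow catF K (t - K).
Proof.
case: ltnP => h.
  have -> : t%:Z - K%:Z = Negz (K - t).-1 by rewrite NegzE prednK ?subn_gt0 // -subzn ?(ltnW h) // opprB.
  by [].
by rewrite subzn.
Qed.

Lemma inv_series K bound : exists g : nat -> rat,
  (forall p, (p <= bound)%N ->
     \sum_(t < p.+1) spow catF K t * g (p - t)%N = (p == 0%N)%:R) /\
  (forall t, (K < t.*2)%N -> (t <= bound)%N -> g t = - aKn K (t%:Z - K%:Z)).
Proof.
pose D := bound.+1.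
pose Fp : {poly rat} := \poly_(i < D) catF i.
pose Z1 := Fp - 1 - 'X * Fp * Fp.
have hZ : eqm D Z1 0.
  move=> i hi; rewrite coef0 /Z1 !(coefB, coef1) -mulrA coefXM.
  case: i hi => [|i] hi /=; first by rewrite coef_poly hi catF0 subrr.
  rewrite coef_poly hi catalan_rec subr0 coefM; apply/eqP; rewrite subr_eq0; apply/eqP.
  apply: eq_bigr => j _.
  have hj : (j < D)%N by apply: leq_ltn_trans (ltnW hi); rewrite -ltnS.
  have hij : (i - j < D)%N by rewrite (leq_ltn_trans (leq_subr _ _)) // ltnW.
  by rewrite !coef_poly hj hij.
have hFp : Fp = \poly_(i < D) catF i by [].
have hZ1 : Z1 = Fp - 1 - 'X * Fp * Fp by [].
clearbody Fp Z1.
pose Y := 1 - 'X * Fp.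
pose W := 'X * Fp.
pose Q k := Y ^+ k + W ^+ k.
have hQ : forall k, Q k.+2 = Q k.+1 - 'X * Q k - 'X * Z1 * Q k.
  move=> k; rewrite /Q hZ1 /Y /W !exprS.
  move: ((1 - 'X * Fp) ^+ k) (('X * Fp) ^+ k) => a b. ring.
have hPQ : forall k, eqm D (Pp k) (Q k) /\ eqm D (Pp k.+1) (Q k.+1).
  elim=> [|k [IH1 IH2]].
    by split; apply: eqm_eq; rewrite /Q /= ?expr1 ?expr0 // /Y /W subrK.
  split=> //.
  rewrite hQ /=.
  apply: eqm_trans (_ : eqm D _ (Q k.+1 - 'X * Q k - 0)) _.
    rewrite subr0; apply: eqmB => //; apply: eqmM => //; exact: eqm_refl.
  apply: eqmB; first exact: eqm_refl.
  apply: eqm_sym; rewrite -(mulr0 ('X : {poly rat})) -mulrA.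
  apply: eqmM; first exact: eqm_refl.
  rewrite -(mul0r (Q k)); apply: eqmM => //; exact: eqm_refl.
pose Gp := Pp K - 'X ^+ K * Fp ^+ K.
have hG : eqm D (Fp ^+ K * Gp) 1.
  have e1 : Fp ^+ K * Q K - 'X ^+ K * (Fp ^+ K * Fp ^+ K) = (Fp * Y) ^+ K.
    rewrite /Q /W mulrDr !exprMn.
    move: (Fp ^+ K) (('X : {poly rat}) ^+ K) (Y ^+ K) => a b c; ring.
  apply: eqm_trans (_ : eqm D _ (Fp ^+ K * Q K - 'X ^+ K * (Fp ^+ K * Fp ^+ K))) _.
    rewrite /Gp mulrBr; apply: eqmB.
      apply: eqmM; first exact: eqm_refl. by case: (hPQ K).
    apply: eqm_eq; ring.
  rewrite e1 -(expr1n _ K); apply: eqmX.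
  have -> : Fp * Y = 1 + Z1 by rewrite /Y hZ1; ring.
  rewrite -[X in eqm _ _ X]addr0; apply: eqmD => //; exact: eqm_refl.
exists (fun t => Gp`_t); split.
  move=> p hp.
  have hpD : (p < D)%N by [].
  rewrite -coef1 -(hG p hpD) coefM; apply: eq_bigr => t _.
  rewrite hFp powF //; apply: leq_ltn_trans hpD; rewrite -ltnS.
  exact: ltn_ord.
move=> t ht htb.
rewrite /Gp coefB coefXnM aKn_sub (proj1 (Pp_coef K) t ht) sub0r.
case: ltnP => // hKt.
rewrite hFp powF //.
by rewrite (leq_ltn_trans (leq_subr _ _)).
Qed.

Definition fz (f : nat -> rat) (t : int) : rat :=
  match t with Posz n => f n | Negz _ => 0 end.

Lemma fz_sub f t K : fz f (t%:Z - K%:Z) = if (t < K)%N then 0 else f (t - K)%N.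
Proof.
case: ltnP => h.
  have -> : t%:Z - K%:Z = Negz (K - t).-1 by rewrite NegzE prednK ?subn_gt0 // -subzn ?(ltnW h) // opprB.
  by [].
by rewrite subzn.
Qed.

Lemma det_anti s :
  \det (\matrix_(i < s, j < s) (((i + j).+1 == s)%N)%:R : 'M[rat]_s) = (-1) ^+ 'C(s, 2).
Proof.
elim: s => [|s IH]; first by rewrite det_mx00.
rewrite (expand_det_row _ ord0) (bigD1 ord_max) //= big1 ?addr0; last first.
  move=> j hj; rewrite mxE add0n eqSS.
  have -> : (j == s :> nat) = false.
    by apply/negbTE; move: hj; apply: contra => /eqP h; apply/eqP/val_inj.
  by rewrite mul0r.
rewrite mxE add0n eqxx mul1r /cofactor add0n.
have -> : row' ord0 (col' ord_max (\matrix_(i < s.+1, j < s.+1) (((i + j).+1 == s.+1)%N)%:R : 'M[rat]_s.+1))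
   = \matrix_(i < s, j < s) (((i + j).+1 == s)%N)%:R.
  by apply/matrixP => i j; rewrite !mxE lift0 lift_max addSn eqSS.
by rewrite IH binS bin1 exprD mulrC.
Qed.

Lemma sum_trunc L i (F : nat -> rat) : (i < L)%N ->
  \sum_(l < L) (if (l <= i)%N then F l else 0) = \sum_(0 <= l < i.+1) F l.
Proof.
move=> hi.
rewrite -(big_mkord xpredT (fun l => if (l <= i)%N then F l else 0)).
rewrite (@big_cat_nat _ _ _ i.+1) //=.
rewrite [X in _ + X]big_nat_cond [X in _ + X]big1 ?addr0; last first.
  move=> l /andP [/andP [h1 h2] _]; rewrite leqNgt h1 //.
by apply: eq_big_nat => l /andP [_ h]; rewrite -ltnS h.
Qed.

Section Hankel.
Variables (f g : nat -> rat) (s n : nat).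
Hypothesis f0 : f 0%N = 1.
Hypothesis hconv : forall p, (p <= (s + n).*2)%N ->
  \sum_(t < p.+1) f t * g (p - t)%N = (p == 0%N)%:R.

Let L := (s + n)%N.

Definition Amx : 'M[rat]_(s + n) :=
  \matrix_(i < s + n, j < s + n) fz f ((i + j)%N%:Z + (1 - s%:Z)).
Definition Vmx : 'M[rat]_(s + n) :=
  \matrix_(i < s + n, l < s + n) (if (l <= i)%N then g (i - l)%N else 0).
Definition Umx : 'M[rat]_n :=
  \matrix_(u < n, j < n) (if (u <= j)%N then f (j - u)%N else 0).
Definition Gmx : 'M[rat]_n := \matrix_(i < n, j < n) g (s + 1 + i + j)%N.

Lemma conv_nat p : (p <= (s + n).*2)%N ->
  \sum_(0 <= t < p.+1) f t * g (p - t)%N = (p == 0%N)%:R.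
Proof. by move=> hp; rewrite big_mkord hconv. Qed.

Lemma g0 : g 0%N = 1.
Proof. by have := @hconv 0%N (leq0n _); rewrite big_ord1 f0 mul1r. Qed.

Lemma det_V : \det Vmx = 1.
Proof.
rewrite det_trig; last by apply/is_trig_mxP => i j hij; rewrite mxE leqNgt hij.
by rewrite big1 // => i _; rewrite mxE leqnn subnn g0.
Qed.

Lemma det_U : \det Umx = 1.
Proof.
rewrite -det_tr det_trig; last by apply/is_trig_mxP => i j hij; rewrite !mxE leqNgt hij.
by rewrite big1 // => i _; rewrite !mxE leqnn subnn f0.
Qed.

Lemma VA_entry (i j : 'I_(s + n)) : (Vmx *m Amx) i j =
  if (j < s)%N then (((i + j).+1 == s)%N)%:R
  else - \sum_(0 <= t < (j - s).+1) f t * g (i + (j - s) + 1 - t)%N.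
Proof.
rewrite mxE.
have -> : \sum_(l < s + n) Vmx i l * Amx l j =
   \sum_(l < s + n) (if (l <= i)%N then g (i - l)%N * fz f ((l + j)%N%:Z + (1 - s%:Z)) else 0).
  by apply: eq_bigr => l _; rewrite !mxE; case: ifP => _; rewrite ?mul0r.
rewrite (@sum_trunc _ i (fun l => g (i - l)%N * fz f ((l + j)%N%:Z + (1 - s%:Z))) (ltn_ord i)).
case: ltnP => hjs.
  pose d := (s - j.+1)%N.
  have hd : forall l : nat, (l + j)%N%:Z + (1 - s%:Z) = l%:Z - d%:Z.
    by move=> l; rewrite /d; lia.
  under eq_bigr => l _ do rewrite hd fz_sub.
  case: (ltnP i d) => hid.
    rewrite big_nat_cond big1; last first.
      by move=> l /andP [/andP [_ h] _]; rewrite (leq_trans h hid) mulr0.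
    have -> : ((i + j).+1 == s) = false by apply/negbTE; rewrite /d in hid; lia.
    by [].
  rewrite (@big_cat_nat _ _ _ d) //=; last by lia.
  rewrite big_nat_cond big1 ?add0r; last first.
    by move=> l /andP [/andP [_ h] _]; rewrite h mulr0.
  rewrite -{1}[d]add0n big_addn.
  have -> : (i.+1 - d = (i - d).+1)%N by rewrite subSn.
  have -> : ((i + j).+1 == s) = (i - d == 0)%N by rewrite /d in hid *; apply/eqP/eqP; lia.
  rewrite -conv_nat; last by have := ltn_ord i; lia.
  apply: eq_big_nat => l /andP [_ hl].
  have -> : (l + d < d)%N = false by rewrite ltnNge leq_addl.
  rewrite addnK mulrC; congr (_ * g _); lia.
pose j' := (j - s)%N.
have hd : forall l : nat, (l + j)%N%:Z + (1 - s%:Z) = (l + j').+1%:Z.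
  by move=> l; rewrite /j'; lia.
under eq_bigr => l _ do rewrite hd /=.
pose p := (i + j' + 1)%N.
have hp : (p <= (s + n).*2)%N.
  by rewrite /p /j'; have := ltn_ord i; have := ltn_ord j; lia.
have := @conv_nat p hp.
have -> : (p == 0%N) = false by rewrite /p addn1.
rewrite (@big_cat_nat _ _ _ j'.+1) //=; last by rewrite /p; lia.
rewrite -{2}[j'.+1]add0n big_addn.
have -> : (p.+1 - j'.+1 = i.+1)%N by rewrite /p; lia.
move/eqP; rewrite addrC addr_eq0 => /eqP h.
transitivity (\sum_(0 <= l < i.+1) f (l + j'.+1)%N * g (p - (l + j'.+1))%N).
  apply: eq_big_nat => l /andP [_ hl].
  rewrite mulrC addnS; congr (_ * g _); rewrite /p; lia.
by rewrite h.
Qed.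

Lemma hankel_main : \det Amx = (-1) ^+ 'C(s, 2) * (-1) ^+ n * \det Gmx.
Proof.
have e : \det (Vmx *m Amx) = \det Amx by rewrite det_mulmx det_V mul1r.
rewrite -e -[Vmx *m Amx]submxK.
have -> : dlsubmx (Vmx *m Amx) = 0.
  apply/matrixP => i j; rewrite [LHS]mxE [LHS]mxE VA_entry /= ltn_ord mxE.
  by have -> : ((s + i + j).+1 == s) = false by lia.
rewrite det_ublock.
have -> : ulsubmx (Vmx *m Amx) = \matrix_(i < s, j < s) (((i + j).+1 == s)%N)%:R.
  by apply/matrixP => i j; rewrite [LHS]mxE [LHS]mxE VA_entry /= ltn_ord mxE.
have -> : drsubmx (Vmx *m Amx) = - (Gmx *m Umx).
  apply/matrixP => i j; rewrite [LHS]mxE [LHS]mxE VA_entry /= [RHS]mxE.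
  have -> : (s + j < s)%N = false by rewrite ltnNge leq_addr.
  rewrite addKn mxE; congr (- _).
  have -> : \sum_(u < n) Gmx i u * Umx u j =
     \sum_(u < n) (if (u <= j)%N then g (s + 1 + i + u)%N * f (j - u)%N else 0).
    by apply: eq_bigr => u _; rewrite !mxE; case: ifP => _; rewrite ?mulr0.
  rewrite (@sum_trunc _ j (fun u => g (s + 1 + i + u)%N * f (j - u)%N) (ltn_ord j)).
  rewrite big_nat_rev /=; apply: eq_big_nat => t /andP [_ ht].
  rewrite add0n mulrC; congr (g _ * f _); lia.
rewrite det_anti -scaleN1r detZ det_mulmx det_U mulr1.
by rewrite mulrA.
Qed.
End Hankel.

Lemma sign_sq n : (-1) ^+ n * (-1) ^+ n = 1 :> rat.
Proof. by rewrite -exprD addnn -mul2n exprM sqrrN !expr1n. Qed.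

Lemma hankel_zero K M N : (0 < N)%N -> (forall j : nat, (j < N)%N -> j%:Z + M < 0) ->
  hankelD K M N = 0.
Proof.
case: N => // N _ h.
rewrite /hankelD (expand_det_row _ ord0) big1 // => j _.
rewrite mxE add0n.
have := h j (ltn_ord j).
by case: (j%:Z + M) => // t; rewrite mul0r.
Qed.

Lemma hankel_shift K (s n : nat) (M M' : int) : M = 1 - s%:Z ->
  M' = (s + 1)%:Z - K%:Z -> (K < (s + 1).*2)%N ->
  hankelD K M (s + n) = (-1) ^+ 'C(s, 2) * hankelD K M' n.
Proof.
move=> hM hM' hK.
have [g [hc hg]] := inv_series K (s + n).*2.
have f0 : spow catF K 0 = 1.
  clear; elim: K => [|K IH] //=; by rewrite big_ord1 catF0 IH mulr1.
have := @hankel_main (spow catF K) g s n f0 hc.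
have -> : \det (Amx (spow catF K) s n) = hankelD K M (s + n).
  rewrite /hankelD /Amx hM; congr (\det _); apply/matrixP => i j; rewrite !mxE.
have -> : Gmx g s n = - \matrix_(i < n, j < n) aKn K ((i + j)%N%:Z + M').
  apply/matrixP => i j; rewrite !mxE hg; last 2 first.
  - by lia.
  - by have := ltn_ord i; have := ltn_ord j; lia.
  congr (- aKn _ _); rewrite hM'; lia.
rewrite -scaleN1r detZ => ->.
by rewrite /hankelD -mulrA (mulrA ((-1) ^+ n)) sign_sq mul1r.
Qed.

Theorem theorem1p1 (k m : nat) (hk : (0 < k)%N) :
  [/\ (forall N : nat, (1 <= N <= m + k - 1)%N ->
         hankelD (k.*2) (1 - k%:Z - m%:Z) N = 0),
      (forall n : nat,
         hankelD (k.*2) (1 - k%:Z - m%:Z) (n + m + k)%N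
         = (-1) ^+ 'C(m + k, 2) * hankelD (k.*2) (1 - k%:Z + m%:Z) n),
      (forall N : nat, (1 <= N <= m + k - 2)%N ->
         hankelD (k.*2 - 1)%N (2 - k%:Z - m%:Z) N = 0) &
      (forall n : nat,
         hankelD (k.*2 - 1)%N (2 - k%:Z - m%:Z) (n + m + k - 1)%N
         = (-1) ^+ 'C(m + k - 1, 2) * hankelD (k.*2 - 1)%N (1 - k%:Z + m%:Z) n)].
Proof.
split.
- move=> N /andP [h1 h2]; apply: hankel_zero => // j hj; lia.
- move=> n; have -> : (n + m + k = (m + k) + n)%N by lia.
  apply: hankel_shift; rewrite -?muln2; lia.
- move=> N /andP [h1 h2]; apply: hankel_zero => // j hj; lia.
- move=> n; have -> : (n + m + k - 1 = (m + k - 1) + n)%N by lia.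
  apply: hankel_shift; rewrite -?muln2; lia.
Qed.
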